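(* Let $G$ be a graph containing no cycle of length 6, let $x\in V(G)$, and let $A$ be a bipartite connected component of $G[N_2(x)]$ with vertex sets of bipartition $V_1$ and $V_2$. Then for each $i\in\{1,2\}$, if $|V_i|\ge 2$ then $|N(x)\cap N(V_i)|=1$.
   Context: All graphs are finite, simple and undirected; ''containing no cycle of length 6'' means having no subgraph (not necessarily induced) isomorphic to $C_6$. $N_i(S)$ denotes the set of vertices at distance exactly $i$ from the vertex set $S$, $N(S)=N_1(S)$, $N(v)=N(\{v\})$, $N_2(v)=N_2(\{v\})$. *)

(* Defs.v *)
From mathcomp Require Import all_boot.
Set Implicit Arguments. Unset Strict Implicit. Unset Printing Implicit Defensive.

Section Graphs.
Variable T : finType.
Variable e : rel T.

Definition simple_graph := symmetric e /\ irreflexive e.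

(* G contains a 6-cycle as a (not necessarily induced) subgraph:
   six pairwise distinct vertices v_0..v_5 with v_i v_{i+1 mod 6} edges. *)
Definition has_C6 :=
  exists v : 'I_6 -> T, injective v /\
    forall i : 'I_6, e (v i) (v (ordS i)).

Fixpoint walk (k : nat) (x y : T) : bool :=
  match k with
  | 0 => x == y
  | k'.+1 => [exists z, e x z && walk k' z y]
  end.

(* N_i(S): vertices at distance exactly i from S *)
Definition Ni (i : nat) (S : {set T}) : {set T} :=
  [set y | [exists s in S, walk i s y] &&
           [forall j : 'I_i, forall s in S, ~~ walk j s y]].

Definition Nset (S : {set T}) := Ni 1 S.
Definition N1 (v : T) := Ni 1 [set v].
Definition N2 (v : T) := Ni 2 [set v].

Definition induced (W : {set T}) : rel T :=
  fun a b => [&& e a b, a \in W & b \in W].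

Definition is_component (W A : {set T}) :=
  exists2 a0, a0 \in W & A = [set y in W | connect (induced W) a0 y].

Definition is_bipartition (A V1 V2 : {set T}) :=
  [/\ V1 :|: V2 = A, [disjoint V1 & V2],
      {in V1 &, forall a b, ~~ e a b} & {in V2 &, forall a b, ~~ e a b}].
End Graphs.

(* Main.v *)
Require Import Defs.
From mathcomp Require Import all_boot.
Set Implicit Arguments. Unset Strict Implicit. Unset Printing Implicit Defensive.

Lemma walk1 (T : finType) (e : rel T) y z : walk e 1 y z = e y z.
Proof.
rewrite /=; apply/existsP/idP => [[w /andP[H /eqP<-]]|H] //.
by exists z; rewrite H eqxx.
Qed.

Lemma inNset (T : finType) (e : rel T) (S : {set T}) y :
  y \in Nset e S = [exists s in S, e s y] && (y \notin S).
Proof.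
rewrite inE; congr andb.
  apply/existsP/existsP => [[s /andP[Hs H]]|[s /andP[Hs H]]];
    exists s; rewrite Hs; by move: H; rewrite ?walk1.
apply/forallP/idP => [H|H j].
  move: (H ord0) => /forallP H0; apply/negP => yS.
  by have := H0 y; rewrite yS /= eqxx.
apply/forallP => s; apply/implyP => sS.
case: j => [[|//] ?] /=; by apply: contra H => /eqP <-.
Qed.

Lemma inN1 (T : finType) (e : rel T) (irr : irreflexive e) x y :
  y \in N1 e x = e x y.
Proof.
rewrite /N1 -/(Nset e [set x]) inNset in_set1.
apply/andP/idP => [[/existsP[s /andP[/set1P -> //]]]|H].
split; first by apply/existsP; exists x; rewrite in_set1 eqxx.
by apply: contraL H => /eqP ->; rewrite irr.
Qed.

Lemma inN2 (T : finType) (e : rel T) x y :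
  y \in N2 e x -> [/\ exists z, e x z && e z y, ~~ e x y & y != x].
Proof.
rewrite inE => /andP[/existsP[s /andP[/set1P -> /existsP[z /andP[H1 H2]]]]] /forallP H.
split.
- exists z; rewrite H1 /= -walk1; exact: H2.
- have := H (@Ordinal 2 1 isT) => /forallP /(_ x); by rewrite in_set1 eqxx walk1.
- have := H (@Ordinal 2 0 isT) => /forallP /(_ x); rewrite in_set1 eqxx /=.
  by rewrite eq_sym.
Qed.

Lemma c6 (T : finType) (e : rel T) (sym : symmetric e) (irr : irreflexive e)
  x a b c u w :
  a \in N2 e x -> b \in N2 e x -> c \in N2 e x -> a != b ->
  e a c -> e b c -> e x u -> e x w -> e u a -> e w b -> u != w -> has_C6 e.
Proof.
move=> /inN2[_ na ax] /inN2[_ nb bx] /inN2[_ nc cx] ab ac bc xu xw ua wb uw.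
have ne : forall p q, e p q -> p != q.
  by move=> p q; apply: contraTneq => ->; rewrite irr.
have ne2 : forall p q, e x p -> ~~ e x q -> p != q.
  by move=> p q H1; apply: contraNneq => <-.
move: (ne _ _ xu) (ne _ _ xw) (ne _ _ ac) (ne _ _ bc)
  (ne2 _ _ xu na) (ne2 _ _ xu nb) (ne2 _ _ xu nc)
  (ne2 _ _ xw na) (ne2 _ _ xw nb) (ne2 _ _ xw nc) ab uw ax bx cx.
move=> /eqP ? /eqP ? /eqP ? /eqP ? /eqP ? /eqP ? /eqP ? /eqP ? /eqP ? /eqP ?
  /eqP ? /eqP ? /eqP ? /eqP ? /eqP ?.
exists (fun i : 'I_6 => nth x [:: x; u; a; c; b; w] i); split.
  move=> [i Hi] [j Hj] /= H; apply: val_inj => /=.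
  case: i Hi H => [|[|[|[|[|[|i]]]]]] Hi H //;
  case: j Hj H => [|[|[|[|[|[|j]]]]]] Hj //= H; congruence.
move=> [i Hi]; case: i Hi => [|[|[|[|[|[|i]]]]]] Hi //; rewrite /ordS /=.
all: by rewrite sym.
Qed.

Lemma conn_ind (T : finType) (R : rel T) (P : T -> Prop) a b :
  (forall y z, R y z -> P y -> P z) -> P a -> connect R a b -> P b.
Proof.
move=> step Pa /connectP [p]; elim: p a Pa => [|z p IH] a Pa /=; first by move=> _ ->.
by case/andP=> Raz pth Eb; apply: (IH z (step _ _ Raz Pa) pth Eb).
Qed.

Lemma mainV (T : finType) (e : rel T) (sym : symmetric e) (irr : irreflexive e)
  x (A V1 V2 : {set T}) :
  ~ has_C6 e -> is_component e (N2 e x) A -> is_bipartition e A V1 V2 ->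
  1 < #|V1| -> #|N1 e x :&: Nset e V1| = 1.
Proof.
move=> noC6 [a0 a0N defA] [defU dis i1 i2] /card_gt1P [a [b [aV1 bV1 ab]]].
have memA : forall y, (y \in A) = (y \in N2 e x) && connect (induced e (N2 e x)) a0 y.
  by move=> y; rewrite defA in_set.
have AN2 : {subset A <= N2 e x} by move=> y; rewrite memA => /andP[].
have V1A : {subset V1 <= A} by move=> y yV; rewrite -defU inE yV.
have symI : symmetric (induced e (N2 e x)).
  by move=> p q; rewrite /induced sym; congr andb; exact: andbC.
have connA : forall y z, y \in A -> z \in A -> connect (induced e (N2 e x)) y z.
  move=> y z; rewrite !memA => /andP[_ Hy] /andP[_ Hz].
  by apply: connect_trans Hz; rewrite (sym_connect_sym symI).
have stepA : forall y z, induced e (N2 e x) y z -> y \in A -> z \in A.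
  move=> y z Ryz; have /and3P[_ _ zN] := Ryz.
  rewrite !memA => /andP[_ Hy]; rewrite zN /=.
  exact: connect_trans Hy (connect1 Ryz).
have inV : forall y, y \in A -> (y \in V1) || (y \in V2) by move=> y; rewrite -defU inE.
have disj : forall y, y \in V1 -> y \in V2 -> False.
  by move=> y yV1; rewrite (disjointFr dis yV1).
have e12 : forall y z, y \in V1 -> z \in A -> e y z -> z \in V2.
  move=> y z yV zA eyz; case/orP: (inV z zA) => // zV.
  by have := i1 y z yV zV; rewrite eyz.
have e21 : forall y z, y \in V2 -> z \in A -> e y z -> z \in V1.
  move=> y z yV zA eyz; case/orP: (inV z zA) => // zV.
  by have := i2 y z yV zV; rewrite eyz.
have pair : exists a1 b1 c, [/\ a1 \in V1, b1 \in V1, a1 != b1, c \in N2 e x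
                           & e a1 c && e b1 c].
  have : b \in A /\ ((exists a1 b1 c, [/\ a1 \in V1, b1 \in V1, a1 != b1, c \in N2 e x
                           & e a1 c && e b1 c]) \/ b = a \/ (b \in V2 /\ e b a)).
    pattern b; apply: (conn_ind _ _ (connA a b (V1A a aV1) (V1A b bV1))); last first.
      by split; [exact: V1A | right; left].
    move=> y z Ryz [Ay H]; have Az := stepA _ _ Ryz Ay; split => //.
    have /and3P[eyz _ _] := Ryz.
    case: H => [pe|[Ey|[yV2 ya]]]; first by left.
      subst y; right; right; split; [exact: e12 eyz| by rewrite sym].
    have zV1 := e21 _ _ yV2 Az eyz.
    case: (eqVneq z a) => [->|za]; first by right; left.
    left; exists a, z, y; split => //; first by rewrite eq_sym.
      exact: AN2.
    by rewrite sym ya sym eyz.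
  case=> _ [//|[ba|[bV2 _]]]; first by rewrite ba eqxx in ab.
  by case: (disj b bV1 bV2).
have Ux : forall u, u \in N1 e x :&: Nset e V1 -> e x u.
  by move=> u; rewrite inE inN1 // => /andP[].
have uinv : forall u, u \in N1 e x :&: Nset e V1 -> forall y, y \in V1 -> e u y.
  move=> u uU; have xu := Ux u uU; move: uU.
  rewrite inE inNset => /andP[_ /andP[/existsP[a' /andP[aV1' au]] _]] y yV1.
  have : y \in A /\ (y \in V1 -> e u y) /\
         (y \in V2 -> forall b, b \in V1 -> e y b -> e u b).
    pattern y; apply: (conn_ind _ _ (connA a' y (V1A a' aV1') (V1A y yV1))); last first.
      split; first exact: V1A.
      split=> [_|aV2]; first by rewrite sym.
      by case: (disj a' aV1' aV2).
    move=> y' z Ryz [Ay [H1 H2]]; have Az := stepA _ _ Ryz Ay.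
    have /and3P[eyz _ zN] := Ryz.
    split=> //; split.
      move=> zV1; have yV2 := e12 _ _ zV1 Ay (etrans (sym _ _) eyz).
      exact: H2 yV2 z zV1 eyz.
    move=> zV2 b' bV1' ezb.
    have yV1' := e21 _ _ zV2 Ay (etrans (sym _ _) eyz).
    have uy := H1 yV1'.
    case: (eqVneq b' y') => [->//|by'].
    have bN := AN2 _ (V1A _ bV1').
    have [[w /andP[xw wb]] _ _] := inN2 bN.
    case: (eqVneq w u) => [<-//|wu].
    exfalso; apply: noC6.
    apply: (c6 sym irr (a:=y') (b:=b') (c:=z) (u:=u) (w:=w)) => //.
    all: try exact: AN2.
    all: try done.
    all: try by rewrite eq_sym.
    all: try by rewrite sym.
  by case=> _ [H _]; exact: H yV1.
have [[z /andP[xz za]] _ _] := inN2 (AN2 _ (V1A _ aV1)).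
have zU : z \in N1 e x :&: Nset e V1.
  rewrite in_setI inN1 // xz inNset /=; apply/andP; split.
    by apply/existsP; exists a; rewrite aV1 sym.
  apply/negP => zV1; have [_ nz _] := inN2 (AN2 _ (V1A _ zV1)).
  by rewrite xz in nz.
rewrite (_ : _ :&: _ = [set z]) ?cards1 //.
apply/setP => w; rewrite in_set1; apply/idP/eqP => [wU|->//].
case: pair => a1 [b1 [c [a1V b1V ab1 cN /andP[ac bc]]]].
apply/eqP; apply: contraT => wz; exfalso; apply: noC6.
apply: (c6 sym irr (x:=x) (a:=a1) (b:=b1) (c:=c) (u:=w) (w:=z)) => //.
- exact: AN2 (V1A _ a1V).
- exact: AN2 (V1A _ b1V).
- exact: Ux.
- exact: uinv.
- exact: uinv.
Qed.

Theorem lemma2p4 (T : finType) (e : rel T) (x : T) (A V1 V2 : {set T}) :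
  simple_graph e -> ~ has_C6 e ->
  is_component e (N2 e x) A ->
  is_bipartition e A V1 V2 ->
  forall V, (V = V1 \/ V = V2) ->
    1 < #|V| -> #|N1 e x :&: Nset e V| = 1.
Proof.
move=> [sym irr] noC6 comp bip V [->|->] H; first exact: mainV bip H.
case: bip => [defU dis i1 i2].
apply: (mainV sym irr (A:=A) (V2:=V1)) => //.
by split=> //; [rewrite setUC | rewrite disjoint_sym].
Qed.
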